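(* Let $A$ be an alphabet of size $k$ with $k>1$, and suppose $L\subseteq A^*$ is $n$-PT. Then the canonical (minimal) DFA for $L$ has at most $m$ states, where $\log m = k\left(\frac{n+2k-3}{k-1}\right)^{k-1}\log n\,\log k$, with $\log$ denoting the logarithm to base $2$. Thus, for fixed $k$, the number of states of the canonical DFA of $L$ is in $2^{O(n^{k-1}\log n)}$ where $n=h(L)$.
   Context: For $n\in\mathbb{N}$, $u\sim_n v$ iff $u$ and $v$ have exactly the same (scattered) subwords of length at most $n$. A language $L\subseteq A^*$ is $n$-PT if it is a union of $\sim_n$-classes; $h(L)$ is the least $n$ such that $L$ is $n$-PT. *)

(* Defs.v *)
From mathcomp Require Import all_boot.
From Stdlib Require Import Reals.
Set Implicit Arguments. Unset Strict Implicit. Unset Printing Implicit Defensive.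

Definition language (A : finType) := seq A -> Prop.

Definition sim_n (A : finType) (n : nat) (u v : seq A) : Prop :=
  forall w : seq A, (size w <= n)%N -> subseq w u = subseq w v.

Definition n_PT (A : finType) (n : nat) (L : language A) : Prop :=
  forall u v : seq A, sim_n n u v -> (L u <-> L v).

(* Residual (left quotient) u^{-1} L ; the states of the canonical (minimal)
   DFA of L are exactly the distinct residuals u^{-1}L, u in A^*. *)
Definition residual (A : finType) (L : language A) (u : seq A) : language A :=
  fun w => L (u ++ w).

Definition residuals_distinct (A : finType) (L : language A) (u v : seq A) : Prop :=
  exists w, ~ (residual L u w <-> residual L v w).

(* The canonical DFA of L has at most m states: any family of words with
   pairwise distinct residuals has at most m members. *)
Definition canonical_dfa_states_le (A : finType) (L : language A) (m : R) : Prop :=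
  forall s : seq (seq A),
    (forall i j, (i < j)%N -> (j < size s)%N ->
       residuals_distinct L (nth [::] s i) (nth [::] s j)) ->
    (INR (size s) <= m)%R.

Definition log2 (x : R) : R := (ln x / ln 2)%R.

(* Main.v *)
Require Import Defs.
From mathcomp Require Import all_boot.
From Stdlib Require Import Reals.
From mathcomp Require Import zify.
From Stdlib Require Import Lia Lra Psatz.
Set Implicit Arguments. Unset Strict Implicit. Unset Printing Implicit Defensive.

Lemma subseq_cat_split (T : eqType) (w u t : seq T) :
  subseq w (u ++ t) -> exists w1 w2, w = w1 ++ w2 /\ subseq w1 u /\ subseq w2 t.
Proof.
elim: u w => [|x u IH] w /=.
  by move=> H; exists [::]; exists w; split => //; split => //; apply: sub0seq.
case: w => [|y w]; first by move=> _; exists [::]; exists [::]; rewrite !sub0seq.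
rewrite /=; case: ifP => [/eqP -> | _] H.
  have [w1 [w2 [-> [H1 H2]]]] := IH _ H.
  by exists (x :: w1), w2; rewrite /= eqxx.
have [w1 [w2 [E [H1 H2]]]] := IH _ H.
exists w1, w2; split=> //; split=> //.
by apply: subseq_trans H1 (subseq_cons _ _).
Qed.

Lemma sim_cat (A : finType) n (u v w : seq A) : sim_n n u v -> sim_n n (u ++ w) (v ++ w).
Proof.
move=> H x Hx.
apply/idP/idP => /subseq_cat_split [x1 [x2 [E [H1 H2]]]]; rewrite E;
  apply: cat_subseq => //; (have Hs : size x1 <= n by
    rewrite (leq_trans _ Hx) // E size_cat leq_addr).
  by rewrite -H.
by rewrite H.
Qed.

Lemma sim_sym (A : finType) n (u v : seq A) : sim_n n u v -> sim_n n v u.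
Proof. by move=> H w Hw; rewrite H. Qed.

Lemma sim_trans (A : finType) n (u v w : seq A) : sim_n n u v -> sim_n n v w -> sim_n n u w.
Proof. by move=> H1 H2 x Hx; rewrite H1 // H2. Qed.

Lemma sim_refl (A : finType) n (u : seq A) : sim_n n u u.
Proof. by []. Qed.

Lemma sim_mem (A : finType) n (u v : seq A) x : 0 < n -> sim_n n u v -> x \in u -> x \in v.
Proof. by move=> Hn H; rewrite -!sub1seq H. Qed.

Lemma greedy_split (T : eqType) (w v t : seq T) : subseq w (v ++ t) ->
  exists w1 w2, [/\ w = w1 ++ w2, subseq w1 v, subseq w2 t &
     forall c y, w2 = c :: y -> ~~ subseq (rcons w1 c) v].
Proof.
move=> H.
have [w1 [w2 [E [H1 H2]]]] := subseq_cat_split H.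
pose good i := [&& i <= size w, subseq (take i w) v & subseq (drop i w) t].
have ex : exists i, good i.
  exists (size w1); rewrite /good E take_size_cat // drop_size_cat // H1 H2.
  by rewrite size_cat leq_addr.
have ub : forall i, good i -> i <= size w by move=> i /and3P [].
case: (ex_maxnP ex ub) => i /and3P [Hi Ht Hd] Hmax.
exists (take i w), (drop i w); split => //; first by rewrite cat_take_drop.
move=> c y Ed; apply/negP => Hc.
have Hlt : i < size w.
  by rewrite ltnNge; apply/negP => Hle; move: Ed; rewrite drop_oversize.
have Hn : nth c w i = c.
  by move: (drop_nth c Hlt); rewrite Ed => -[].
have Hg : good i.+1.
  rewrite /good Hlt (take_nth c Hlt) Hn Hc /=.
  move: (drop_nth c Hlt); rewrite Ed Hn => -[] <-.
  by apply: subseq_trans Hd; rewrite Ed subseq_cons.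
by move: (Hmax _ Hg); rewrite ltnn.
Qed.

Definition letters_in (A : finType) (B : {set A}) (s : seq A) := all (fun x => x \in B) s.
Definition covers (A : finType) (B : {set A}) (s : seq A) := all (fun x => x \in s) (enum B).

Lemma coversP (A : finType) (B : {set A}) s x : covers B s -> x \in B -> x \in s.
Proof. by move/allP => H Hx; apply: H; rewrite mem_enum. Qed.

Lemma letters_sub (A : finType) (B : {set A}) s t : subseq s t -> letters_in B t -> letters_in B s.
Proof. by move=> /mem_subseq Hs /allP Ht; apply/allP => x /Hs /Ht. Qed.

Lemma univ (A : finType) (B : {set A}) (ss : seq (seq A)) (w : seq A) :
  (forall s, s \in ss -> covers B s) -> letters_in B w -> size w <= size ss ->
  subseq w (flatten ss).
Proof.
elim: w ss => [|c w IH] ss; first by rewrite sub0seq.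
case: ss => [|s ss] //= Hc /andP [HcB Hw] Hs.
rewrite -cat1s; apply: cat_subseq.
  by rewrite sub1seq (coversP (Hc _ (mem_head _ _)) HcB).
apply: IH => // s' Hs'; apply: Hc; by rewrite inE Hs' orbT.
Qed.

Definition aw1 (A : finType) (qs : seq (seq A * seq A * A)) (z : seq A) :=
  flatten [seq rcons q.1.1 q.2 | q <- qs] ++ z.
Definition aw2 (A : finType) (qs : seq (seq A * seq A * A)) (z : seq A) :=
  flatten [seq rcons q.1.2 q.2 | q <- qs] ++ z.

Lemma archG (A : finType) (B : {set A}) m (qs : seq (seq A * seq A * A)) (z z' : seq A) :
  0 < m ->
  (forall q, q \in qs -> [/\ sim_n m q.1.1 q.1.2, covers B (rcons q.1.1 q.2) &
                            covers B (rcons q.1.2 q.2)]) ->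
  sim_n m.-1 z z' ->
  letters_in B (aw1 qs z) ->
  forall w, size w <= m.-1 + size qs -> subseq w (aw1 qs z) -> subseq w (aw2 qs z').
Proof.
move=> Hm; elim: qs => [|q qs IH] Hq Hz HL w Hw Hsub.
  by move: Hsub; rewrite /aw1 /aw2 /= Hz // -(addn0 m.-1).
case: q Hq HL Hsub Hw => [[v v'] a] Hq HL Hsub Hw.
have E1 : aw1 (((v, v'), a) :: qs) z = v ++ a :: aw1 qs z by rewrite /aw1 /= -catA cat_rcons.
have E2 : aw2 (((v, v'), a) :: qs) z' = v' ++ a :: aw2 qs z' by rewrite /aw2 /= -catA cat_rcons.
have [Hs Hc Hc'] := Hq _ (mem_head _ _).
have Hq' : forall q, q \in qs -> [/\ sim_n m q.1.1 q.1.2, covers B (rcons q.1.1 q.2) &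
                            covers B (rcons q.1.2 q.2)].
  by move=> q Hq0; apply: Hq; rewrite inE Hq0 orbT.
have HL' : letters_in B (aw1 qs z).
  by move: HL; rewrite E1 /letters_in all_cat /= => /and3P [].
have HU : forall x, letters_in B x -> size x <= size qs -> subseq x (aw2 qs z').
  move=> x Hx Hsx; apply: subseq_trans (prefix_subseq _ _).
  apply: (univ (B:=B)) => //; last by rewrite size_map.
  by move=> s /mapP [q Hq0 ->] /=; have [_ _ ->] := Hq' _ Hq0.
have HLw : letters_in B w by apply: letters_sub Hsub HL.
rewrite E2; rewrite E1 in Hsub.
have Hw' : size w <= m + size qs by move: Hw; rewrite /= addnS -addSn prednK.
case: (boolP (subseq (take m w) v)) => Htk.
  rewrite -(cat_take_drop m w); apply: cat_subseq.
    by rewrite -Hs // size_take; case: ifP => // /negbT; rewrite -leqNgt.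
  apply: subseq_trans (subseq_cons _ a); apply: HU.
    by apply: letters_sub HLw; rewrite -{2}(cat_take_drop m w) suffix_subseq.
  by rewrite size_drop leq_subLR.
have [w1 [w2 [Ew H1 H2 Hg]]] := greedy_split Hsub.
case: w2 Ew H2 Hg => [|c y] Ew H2 Hg.
  by move: Htk; rewrite Ew cats0 (subseq_trans (take_subseq _ _) H1).
have Hw1 : size w1 < m.
  rewrite ltnNge; apply/negP => Hle; move: Htk.
  by rewrite Ew takel_cat // (subseq_trans (take_subseq _ _) H1).
have Hv' : subseq w1 v' by rewrite -Hs // ltnW.
rewrite Ew; apply: cat_subseq => //.
have HwE : size w = size w1 + (size y).+1 by rewrite Ew size_cat.
case: (eqVneq c a) => [Eca | Nca].
  move: H2; rewrite Eca /= eqxx => Hy.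
  apply: IH => //.
  move: Hw'; rewrite HwE => H0; clear -H0; lia.
move: H2; rewrite /= (negbTE Nca) => Hcy.
have HcB : c \in B.
  by move: HLw; rewrite Ew /letters_in all_cat /= => /and3P [].
have Hcv : c \in v.
  by move: (coversP Hc HcB); rewrite mem_rcons inE (negbTE Nca).
have Hw1n : 0 < size w1.
  case: w1 {H1 Hv' Hw1 Ew HwE} Hg => [|x w1] // Hg.
  by move: (Hg c y erefl); rewrite /= sub1seq Hcv.
apply: IH => //.
move: Hw' Hw1n; rewrite HwE /= => Ha Hb; clear -Ha Hb Hm; lia.
Qed.

Lemma first_cover (A : finType) (B : {set A}) (u : seq A) : B != set0 -> covers B u ->
  exists v a t, [/\ u = v ++ a :: t, ~~ covers B v & covers B (rcons v a)].
Proof.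
move=> HB; elim/last_ind: u => [|u c IH] Hc.
  by case/set0Pn: HB => x Hx; move: (coversP Hc Hx).
case: (boolP (covers B u)) => Hu.
  have [v [a [t [-> H1 H2]]]] := IH Hu.
  by exists v, a, (rcons t c); rewrite rcons_cat.
by exists u, c, [::]; rewrite cats1.
Qed.

Lemma arch_fact (A : finType) (B : {set A}) (u : seq A) : B != set0 -> letters_in B u ->
  exists (ps : seq (seq A * A)) z b, [/\ u = flatten [seq rcons p.1 p.2 | p <- ps] ++ z,
   (forall p, p \in ps -> [/\ p.2 \in B, letters_in (B :\ p.2) p.1 & covers B (rcons p.1 p.2)]),
   b \in B & letters_in (B :\ b) z].
Proof.
move=> HB; have [m Hm] := ubnP (size u); elim: m u Hm => // m IH u Hm Hu.
case: (boolP (covers B u)) => Hc.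
  have [v [a [t [Eu Hv Hva]]]] := first_cover HB Hc.
  have [b Hb Hbv] : exists2 b, b \in B & b \notin v.
    by case/allPn: Hv => b; rewrite mem_enum => ? ?; exists b.
  have Hba : b = a.
    by move: (coversP Hva Hb); rewrite mem_rcons inE (negbTE Hbv) orbF => /eqP.
  subst b.
  have Hut : letters_in B (v ++ a :: t) by rewrite -Eu.
  have [ps [z [b [Et Hps Hb' Hz]]]] : exists (ps : seq (seq A * A)) z b,
     [/\ t = flatten [seq rcons p.1 p.2 | p <- ps] ++ z,
     (forall p, p \in ps -> [/\ p.2 \in B, letters_in (B :\ p.2) p.1 & covers B (rcons p.1 p.2)]),
     b \in B & letters_in (B :\ b) z].
    apply: IH; first by move: Hm; rewrite Eu size_cat /=; lia.
    by move: Hut; rewrite /letters_in all_cat /= => /and3P [].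
  exists ((v, a) :: ps), z, b; split => //.
    by rewrite Eu Et /= -catA cat_rcons.
  move=> p; rewrite inE => /orP [/eqP -> /= | /Hps //]; split => //.
  apply/allP => x Hx; rewrite !inE.
  have -> : x != a by apply/eqP => E; move: Hbv; rewrite -E Hx.
  by move: Hut; rewrite /letters_in all_cat => /andP [/allP H _]; rewrite H.
case/allPn: Hc => b; rewrite mem_enum => Hb Hbu.
exists [::], u, b; split => //.
apply/allP => x Hx; rewrite !inE (allP Hu x Hx) andbT.
by apply/eqP => E; move: Hbu; rewrite -E Hx.
Qed.

Definition univw (A : finType) (n : nat) (B : {set A}) : seq A := flatten (nseq n (enum B)).

Fixpoint archs (A : finType) (f : nat -> {set A} -> seq (seq A)) (m : nat) (B : {set A})
  (r : nat) : seq (seq A) :=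
  if r is r'.+1 then
    [seq y ++ x | y <- [seq rcons v a | a <- enum B, v <- f m (B :\ a)], x <- archs f m B r']
  else [:: [::]].

Fixpoint reps (A : finType) (k n : nat) (B : {set A}) {struct k} : seq (seq A) :=
  if k is k'.+1 then
    if n is 0 then [:: [::]] else
    univw n B :: flatten [seq [seq x ++ z | x <- archs (@reps A k') (n - r + 1) B r,
                     z <- flatten [seq reps k' (n - r) (B :\ b) | b <- enum B]] | r <- iota 0 n]
  else [:: [::]].

Lemma archs_mem (A : finType) (f : nat -> {set A} -> seq (seq A)) m (B : {set A})
  (ps : seq (seq A * A)) :
  (forall p, p \in ps -> p.2 \in B /\ exists2 v', v' \in f m (B :\ p.2) & sim_n m p.1 v') ->
  exists qs : seq (seq A * seq A * A), [/\ [seq (q.1.1, q.2) | q <- qs] = ps,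
    (forall q, q \in qs -> sim_n m q.1.1 q.1.2) &
    flatten [seq rcons q.1.2 q.2 | q <- qs] \in archs f m B (size ps)].
Proof.
elim: ps => [|p ps IH] H; first by exists [::].
have [Hp [v' Hv' Hs]] := H _ (mem_head _ _).
have [qs [E1 E2 E3]] := IH (fun p0 Hp0 => H p0 (@mem_behead _ (p :: ps) _ Hp0)).
exists (((p.1, v'), p.2) :: qs); split.
- by rewrite /= E1 -surjective_pairing.
- by move=> q; rewrite inE => /orP [/eqP -> //| /E2].
rewrite /=; apply/allpairsP; exists (rcons v' p.2, flatten [seq rcons q.1.2 q.2 | q <- qs]).
split => //. apply/allpairsPdep. exists p.2; exists v'; split => //. by rewrite mem_enum.
Qed.

Lemma letters_univw (A : finType) n (B : {set A}) : letters_in B (univw n B).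
Proof.
apply/allP => x /flattenP [s]; rewrite mem_nseq => /andP [_ /eqP ->].
by rewrite mem_enum.
Qed.

Lemma univw_sub (A : finType) n (B : {set A}) w :
  letters_in B w -> size w <= n -> subseq w (univw n B).
Proof.
move=> Hw Hs; apply: (univ (B:=B)) => //; last by rewrite size_nseq.
move=> s; rewrite mem_nseq => /andP [_ /eqP ->].
by apply/allP => x; rewrite mem_enum.
Qed.

Lemma letters_set0 (A : finType) (u : seq A) : letters_in set0 u -> u = [::].
Proof. by case: u => //= x u; rewrite inE. Qed.

Lemma sim0 (A : finType) (u v : seq A) : sim_n 0 u v.
Proof. by move=> w; rewrite leqn0 size_eq0 => /eqP ->; rewrite !sub0seq. Qed.

Lemma reps_ok (A : finType) k n (B : {set A}) u : #|B| <= k -> letters_in B u ->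
  exists2 r, r \in reps k n B & sim_n n u r.
Proof.
elim: k n B u => [|k IH] n B u HB Hu.
  move: HB; rewrite leqn0 cards_eq0 => /eqP HB; subst B.
  by rewrite (letters_set0 Hu); exists [::].
case: n => [|n]; first by exists [::]; [rewrite inE | apply: sim0].
case: (eqVneq B set0) => HB0.
  subst B; rewrite (letters_set0 Hu); exists (univw n.+1 set0).
    by rewrite inE eqxx.
  have -> : univw n.+1 (@set0 A) = [::] by rewrite /univw enum_set0; elim: (n.+1) => //.
  by [].
have [ps [z [b [Eu Hps Hb Hz]]]] := arch_fact HB0 Hu.
case: (leqP n.+1 (size ps)) => Hr.
  exists (univw n.+1 B); first by rewrite inE eqxx.
  move=> w Hw; apply/idP/idP => Hsub.
    by apply: univw_sub => //; apply: letters_sub Hsub Hu.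
  have HLw : letters_in B w by apply: letters_sub Hsub (letters_univw _ _).
  rewrite Eu; apply: subseq_trans (prefix_subseq _ _).
  apply: (univ (B:=B)) => //; last by rewrite size_map (leq_trans Hw).
  by move=> s /mapP [p Hp ->]; have [] := Hps _ Hp.
set m := n.+1 - size ps + 1.
have Hm : 0 < m by rewrite /m addn1.
have Hsub_a : forall p, p \in ps -> p.2 \in B /\
    exists2 v', v' \in reps k m (B :\ p.2) & sim_n m p.1 v'.
  move=> p Hp; have [Ha Hl _] := Hps _ Hp; split => //; apply: IH => //.
  by move: HB; rewrite (cardsD1 p.2) Ha.
have [qs [Eq Hsq Hmem]] := archs_mem Hsub_a.
have [z' Hz'm Hzz] : exists2 z', z' \in reps k (n.+1 - size ps) (B :\ b) &
     sim_n (n.+1 - size ps) z z'.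
  by apply: IH => //; move: HB; rewrite (cardsD1 b) Hb.
have Hsz : size qs = size ps by rewrite -Eq size_map.
have Hin : forall q, q \in qs -> (q.1.1, q.2) \in ps by move=> q Hq; rewrite -Eq; apply: map_f.
have Hqs : forall q, q \in qs -> [/\ sim_n m q.1.1 q.1.2, covers B (rcons q.1.1 q.2) &
                            covers B (rcons q.1.2 q.2)].
  move=> q Hq; have [Ha Hl Hc] := Hps _ (Hin _ Hq); split => //.
  exact: Hsq.
  rewrite /covers; apply/allP => x; rewrite mem_enum => Hx.
  have := coversP Hc Hx; rewrite !mem_rcons !inE => /orP [-> // | H].
  by rewrite (sim_mem Hm (Hsq q Hq) H) orbT.
have Eu' : u = aw1 qs z.
  rewrite Eu /aw1 -Eq -map_comp; congr (flatten _ ++ _); by apply: eq_map.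
have Hpos : 0 < n.+1 - size ps by rewrite subn_gt0.
have HL2 : letters_in B (aw2 qs z').
  rewrite /letters_in; apply/allP => x; rewrite /aw2 mem_cat => /orP [/flatten_mapP [q Hq] | Hx].
    have [Ha Hl _] := Hps _ (Hin _ Hq).
    rewrite mem_rcons inE => /orP [/eqP -> // | Hx].
    have := allP Hl x (sim_mem Hm (sim_sym (Hsq q Hq)) Hx).
    by rewrite !inE => /andP [].
  have := allP Hz x (sim_mem Hpos (sim_sym Hzz) Hx).
  by rewrite !inE => /andP [].
have Hmsum : m.-1 + size qs = n.+1 by rewrite /m addn1 /= Hsz subnK // ltnW.
exists (aw2 qs z').
  rewrite inE; apply/orP; right; apply/flatten_mapP; exists (size ps).
    by rewrite mem_iota.
  apply/allpairsP; exists (flatten [seq rcons q.1.2 q.2 | q <- qs], z'); split => //.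
  by apply/flatten_mapP; exists b; rewrite ?mem_enum.
move=> w Hw; apply/idP/idP => Hsub.
  rewrite Eu' in Hsub; apply: (archG (B:=B) (m:=m)) Hsub => //;
    try (by rewrite -Eu'); try (by rewrite Hmsum); by rewrite /m addn1.
set qs2 := [seq ((q.1.2, q.1.1), q.2) | q <- qs].
have E1 : aw1 qs2 z' = aw2 qs z' by rewrite /aw1 /aw2 -map_comp.
have E2 : aw2 qs2 z = aw1 qs z by rewrite /aw1 /aw2 -map_comp.
rewrite Eu' -E2; move: Hsub; rewrite -E1; apply: (archG (B:=B) (m:=m)) => //.
- move=> q /mapP [q0 Hq0 ->] /=; have [H1 H2 H3] := Hqs _ Hq0; split => //.
  exact: sim_sym.
- by rewrite /m addn1 /=; apply: sim_sym.
- by rewrite E1.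
- by rewrite size_map Hmsum.
Qed.

Fixpoint Sb (k n : nat) : nat :=
  if k is k'.+1 then
    1 + sumn [seq expn (k * Sb k' (n - r + 1)) r * (k * Sb k' (n - r)) | r <- iota 0 n]
  else 1.

Lemma sumn_map_le (T : eqType) (s : seq T) (f g : T -> nat) :
  (forall x, x \in s -> f x <= g x) -> sumn (map f s) <= sumn (map g s).
Proof.
elim: s => //= x s IH H; apply: leq_add; first by apply: H; rewrite mem_head.
by apply: IH => y Hy; apply: H; rewrite inE Hy orbT.
Qed.

Lemma sumn_le_const (T : eqType) (s : seq T) (f : T -> nat) c :
  (forall x, x \in s -> f x <= c) -> sumn (map f s) <= size s * c.
Proof.
elim: s => //= x s IH H; rewrite mulSn; apply: leq_add; first by apply: H; rewrite mem_head.
by apply: IH => y Hy; apply: H; rewrite inE Hy orbT.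
Qed.

Lemma size_archs (A : finType) (f : nat -> {set A} -> seq (seq A)) m (B : {set A}) r :
  size (archs f m B r) = expn (sumn [seq size (f m (B :\ a)) | a <- enum B]) r.
Proof.
elim: r => // r IH; rewrite /= size_allpairs IH size_allpairs_dep expnS //.
Qed.

Lemma leq_pow (a b r : nat) : a <= b -> expn a r <= expn b r.
Proof. case: r => [|r] H; first by []. by rewrite leq_exp2r. Qed.

Lemma reps_eq (A : finType) k n (B : {set A}) : reps k.+1 n.+1 B =
  univw n.+1 B :: flatten [seq [seq x ++ z | x <- archs (@reps A k) (n.+1 - r + 1) B r,
                     z <- flatten [seq reps k (n.+1 - r) (B :\ b) | b <- enum B]] | r <- iota 0 n.+1].
Proof. by []. Qed.

Lemma Sb_eq k n : Sb k.+1 n =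
  1 + sumn [seq expn (k.+1 * Sb k (n - r + 1)) r * (k.+1 * Sb k (n - r)) | r <- iota 0 n].
Proof. by []. Qed.

Lemma size_reps (A : finType) k n (B : {set A}) : #|B| <= k -> size (reps k n B) <= Sb k n.
Proof.
elim: k n B => [|k IH] n B HB //.
case: n => [|n] //.
rewrite reps_eq Sb_eq add1n -[size (_ :: _)]/((size _).+1) ltnS.
rewrite size_flatten /shape -map_comp; apply: sumn_map_le => r Hr /=.
rewrite size_allpairs size_archs size_flatten /shape -map_comp.
have HC : forall j, sumn [seq size (reps k j (B :\ a)) | a <- enum B] <= k.+1 * Sb k j.
  move=> j; apply: leq_trans (leq_mul HB (leqnn _)).
  rewrite cardE; apply: sumn_le_const => a Ha; apply: IH.
  by move: HB; rewrite (cardsD1 a) -mem_enum Ha.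
by apply: leq_mul; [apply: leq_pow|]; apply: HC.
Qed.

Lemma pigeon (A : finType) (s R : seq (seq A)) (P : seq A -> seq A -> Prop) :
  (forall x, x \in s -> exists2 y, y \in R & P x y) ->
  (forall i j y, i < j -> j < size s -> P (nth [::] s i) y -> P (nth [::] s j) y -> False) ->
  size s <= size R.
Proof.
elim: s R => [|x s IH] R Hex Hd //=.
have [y Hy Pxy] := Hex x (mem_head _ _).
have H : size s <= size (filter (predC1 y) R).
  apply: IH.
  - move=> x' Hx'.
    have [y' Hy' P'] : exists2 y0, y0 \in R & P x' y0 by apply: Hex; rewrite inE Hx' orbT.
    exists y' => //; rewrite mem_filter Hy' andbT /=.
    apply/eqP => E; subst y'.
    have [j Hj Ej] := nthP [::] Hx'.
    by apply: (Hd 0 j.+1 y) => //=; rewrite Ej.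
  - by move=> i j y0 Hij Hj; apply: (Hd i.+1 j.+1 y0).
apply: leq_ltn_trans H _; rewrite size_filter.
have := count_predC (pred1 y) R.
have -> : count (predC (pred1 y)) R = count (predC1 y) R by apply: eq_count.
move=> <-; rewrite addnC -addn1 leq_add2l -has_count; apply/hasP; exists y => //=.
Qed.

Lemma comb_main (A : finType) n (L : seq A -> Prop) (s : seq (seq A)) :
  n_PT n L ->
  (forall i j, i < j -> j < size s -> residuals_distinct L (nth [::] s i) (nth [::] s j)) ->
  size s <= Sb #|A| n.
Proof.
move=> HL Hd.
have HR : size (reps #|A| n [set: A]) <= Sb #|A| n by apply: size_reps; rewrite cardsT.
apply: leq_trans HR.
apply: (pigeon (P := sim_n n)).
  move=> x _; apply: reps_ok; first by rewrite cardsT.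
  by apply/allP => y; rewrite inE.
move=> i j y Hij Hj H1 H2.
have [w Hw] := Hd i j Hij Hj.
apply: Hw; rewrite /residual; apply: HL; apply: sim_cat.
exact: (sim_trans H1 (sim_sym H2)).
Qed.
Lemma Sb_mono k : forall a b, a <= b -> Sb k a <= Sb k b.
Proof.
elim: k => [|k IH] //.
have step : forall n, Sb k.+1 n <= Sb k.+1 n.+1.
  move=> n; rewrite !Sb_eq leq_add2l.
  have -> : iota 0 n.+1 = iota 0 n ++ [:: n] by rewrite -addn1 iotaD.
  rewrite map_cat sumn_cat.
  apply: leq_trans (leq_addr _ _); apply: sumn_map_le => r; rewrite mem_iota => /andP [_ Hr].
  apply: leq_mul; first apply: leq_pow; apply: leq_mul => //; apply: IH; lia.
move=> a b Hab; rewrite -(subnKC Hab); elim: (b - a) => [|d IHd]; first by rewrite addn0.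
by apply: leq_trans IHd _; rewrite addnS step.
Qed.
Lemma Sb1 j : Sb 1 j = j.+1.
Proof.
rewrite Sb_eq add1n; congr (_.+1).
rewrite (eq_map (g := fun _ => 1)); last by move=> r; rewrite /= !muln1 exp1n.
elim: j => // j IHj.
have -> : iota 0 j.+1 = iota 0 j ++ [:: j] by rewrite -addn1 iotaD.
by rewrite map_cat sumn_cat IHj /= addn0 addn1.
Qed.

Lemma Sb2 j : 2 <= j -> Sb 2 j <= expn (j * j) j.+1.
Proof.
case: j => [|[|[|j]]] // _.
set J := j.+3.
rewrite Sb_eq.
have Hterm : forall r, r \in iota 0 J ->
    expn (2 * Sb 1 (J - r + 1)) r * (2 * Sb 1 (J - r)) <= expn (2 * J + 2) J.
  move=> r; rewrite mem_iota add0n => /andP [_ Hr].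
  rewrite !Sb1.
  apply: (@leq_trans (expn (2 * J + 2) r.+1)); last by apply: leq_pexp2l => //; lia.
  rewrite expnSr; apply: leq_mul; last by lia.
  case: r Hr => [|r] Hr //; apply: leq_pow; lia.
apply: leq_trans (leq_add (leqnn 1) (sumn_le_const Hterm)) _.
rewrite size_iota.
have H1 : 2 * J + 2 <= J * J by rewrite /J; lia.
have H2 : 1 + J * expn (2 * J + 2) J <= J * J * expn (2 * J + 2) J.
  have : 0 < expn (2 * J + 2) J by rewrite expn_gt0.
  move: (expn (2 * J + 2) J) => X HX; rewrite /J; nia.
apply: leq_trans H2 _; rewrite expnS leq_mul2l; apply/orP; right; exact: leq_pow.
Qed.

Open Scope R_scope.

Lemma INR_addn (a b : nat) : INR (a + b)%nat = INR a + INR b.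
Proof. exact: plus_INR. Qed.
Lemma INR_muln (a b : nat) : INR (a * b)%nat = INR a * INR b.
Proof. exact: mult_INR. Qed.
Lemma INR_subn (a b : nat) : (b <= a)%nat -> INR (a - b)%nat = INR a - INR b.
Proof. by move=> H; apply: minus_INR; apply/leP. Qed.
Lemma INR_expn (a b : nat) : INR (expn a b) = INR a ^ b.
Proof. elim: b => [|b IH]; first by []. by rewrite expnS INR_muln IH. Qed.
Lemma INR_le (a b : nat) : (a <= b)%nat -> INR a <= INR b.
Proof. by move=> H; apply: le_INR; apply/leP. Qed.

Lemma ln_le' x y : 0 < x -> x <= y -> ln x <= ln y.
Proof.
move=> Hx Hxy; case: (Rle_lt_or_eq_dec _ _ Hxy) => H.
  by left; apply: ln_increasing.
by rewrite H; right.
Qed.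
Lemma exp_le' x y : x <= y -> exp x <= exp y.
Proof.
move=> Hxy; case: (Rle_lt_or_eq_dec _ _ Hxy) => H.
  by left; apply: exp_increasing.
by rewrite H; right.
Qed.
Lemma ln2_pos : 0 < ln 2.
Proof. rewrite -ln_1; apply: ln_increasing; lra. Qed.
Lemma ln2_lt1 : ln 2 < 1.
Proof.
have H := exp_ineq1 1 ltac:(lra).
rewrite -[X in _ < X](ln_exp 1); apply: ln_increasing; lra.
Qed.
Lemma ln3_ge1 : 1 <= ln 3.
Proof. rewrite -[X in X <= _](ln_exp 1); apply: ln_le'; [apply: exp_pos | apply: exp_le_3]. Qed.
Lemma ln_ge0 x : 1 <= x -> 0 <= ln x.
Proof. move=> H; rewrite -ln_1; apply: ln_le'; lra. Qed.

Lemma exp_pow_INR x n : exp x ^ n = exp (INR n * x).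
Proof.
elim: n => [|n IH]; first by rewrite /= Rmult_0_l exp_0.
by rewrite S_INR /= IH -exp_plus; congr exp; ring.
Qed.

Lemma bernoulli t n : 0 <= t -> 1 + INR n * t <= (1 + t) ^ n.
Proof.
move=> Ht; elim: n => [|n IH]; first by rewrite /=; lra.
rewrite S_INR /=.
have H0 : 0 <= INR n by apply: pos_INR.
nra.
Qed.

Lemma amgm_g m X Y : 0 <= X -> 0 <= Y ->
  0 <= INR m * Y ^ m.+1 - INR m.+1 * Y ^ m * X + X ^ m.+1.
Proof.
move=> HX HY; elim: m => [|m IH]; first by rewrite /=; lra.
have E : INR m.+1 * Y ^ m.+2 - INR m.+2 * Y ^ m.+1 * X + X ^ m.+2 =
   X * (INR m * Y ^ m.+1 - INR m.+1 * Y ^ m * X + X ^ m.+1)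
   + INR m.+1 * Y ^ m * (Y - X) ^ 2.
  rewrite !S_INR /=; ring.
rewrite E.
have H1 : 0 <= INR m.+1 * Y ^ m by apply: Rmult_le_pos; [apply: pos_INR | apply: pow_le].
have H2 : 0 <= (Y - X) ^ 2 by rewrite /= Rmult_1_r; apply: Rle_0_sqr.
have H3 : 0 <= X * (INR m * Y ^ m.+1 - INR m.+1 * Y ^ m * X + X ^ m.+1) by apply: Rmult_le_pos.
have H4 : 0 <= INR m.+1 * Y ^ m * (Y - X) ^ 2 by apply: Rmult_le_pos.
lra.
Qed.

Lemma amgm m X Y : 0 <= X -> 0 <= Y -> (INR m.+1 * X - INR m * Y) * Y ^ m <= X ^ m.+1.
Proof.
move=> HX HY; have := amgm_g m HX HY.
have E : INR m * Y ^ m.+1 = INR m * Y * Y ^ m by rewrite /=; ring.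
rewrite E; nra.
Qed.

Definition Ab (k j : nat) : R :=
  INR k * ((INR j + 2 * INR k - 3) / (INR k - 1)) ^ (k - 1) * log2 (INR j) * log2 (INR k).

Lemma log2_ge0 x : 1 <= x -> 0 <= log2 x.
Proof.
move=> H; rewrite /log2; apply: Rmult_le_pos; first exact: ln_ge0.
by left; apply: Rinv_0_lt_compat; apply: ln2_pos.
Qed.

Lemma log2_le x y : 0 < x -> x <= y -> log2 x <= log2 y.
Proof.
move=> Hx Hxy; rewrite /log2; apply: Rmult_le_compat_r; last exact: ln_le'.
by left; apply: Rinv_0_lt_compat; apply: ln2_pos.
Qed.

Lemma INR_ge (a b : nat) : (b <= a)%nat -> INR b <= INR a.
Proof. exact: INR_le. Qed.

Lemma Ab_ge0 k j : (2 <= k)%nat -> (1 <= j)%nat -> 0 <= Ab k j.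
Proof.
move=> Hk Hj; rewrite /Ab.
have Hk' : 2 <= INR k by apply: (INR_ge Hk).
have Hj' : 1 <= INR j by apply: (INR_ge Hj).
apply: Rmult_le_pos; last by apply: log2_ge0; lra.
apply: Rmult_le_pos; last by apply: log2_ge0; lra.
apply: Rmult_le_pos; first by apply: pos_INR.
apply: pow_le; rewrite /Rdiv; apply: Rmult_le_pos; first lra. by left; apply: Rinv_0_lt_compat; lra.
Qed.

Lemma base2 j : (2 <= j)%nat -> INR (Sb 2 j) <= exp (Ab 2 j * ln 2).
Proof.
move=> Hj.
have Hj' : 2 <= INR j by apply: (INR_ge Hj).
apply: Rle_trans (INR_le (Sb2 Hj)) _.
rewrite INR_expn INR_muln.
have Hp : 0 < INR j * INR j by nra.
rewrite -[INR j * INR j]exp_ln // exp_pow_INR; apply: exp_le'.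
rewrite ln_mult; try lra.
rewrite /Ab /log2 S_INR.
have -> : INR 2 = 2 by [].
have H2 := ln2_pos.
have -> : ((INR j + 2 * 2 - 3) / (2 - 1)) ^ (2 - 1) = INR j + 1 by rewrite /=; field.
right; field; lra.
Qed.

Lemma INR_sumn_le (s : seq nat) (f : nat -> nat) c :
  (forall x, x \in s -> INR (f x) <= c) -> INR (sumn (map f s)) <= INR (size s) * c.
Proof.
elim: s => [|x s IH] H; first by rewrite /=; lra.
have -> : INR (size (x :: s)) = INR (size s) + 1 by rewrite -S_INR.
rewrite /= INR_addn.
have H1 : INR (f x) <= c by apply: H; rewrite mem_head.
have H2 : INR (sumn [seq f i | i <- s]) <= INR (size s) * c.
  by apply: IH => y Hy; apply: H; rewrite inE Hy orbT.
rewrite Rmult_plus_distr_r Rmult_1_l (Rplus_comm (INR (size s) * c)); by apply: Rplus_le_compat.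
Qed.

Lemma step m j : (1 <= m)%nat -> (2 <= j)%nat ->
  (forall i, (2 <= i)%nat -> INR (Sb m.+1 i) <= exp (Ab m.+1 i * ln 2)) ->
  INR (Sb m.+2 j) <= exp (Ab m.+2 j * ln 2).
Proof.
move=> Hm Hj IH.
have Hm' : 1 <= INR m by apply: (INR_ge Hm).
have Hj' : 2 <= INR j by apply: (INR_ge Hj).
have Hl2 := ln2_pos.
set X := (INR j + 2 * INR m.+2 - 3) / (INR m.+2 - 1).
have HX : X = (INR j + 2 * INR m + 1) / (INR m + 1).
  by rewrite /X !S_INR; congr (_ / _); ring.
have HX0 : 0 <= X.
  rewrite HX /Rdiv; apply: Rmult_le_pos; first lra.
  by left; apply: Rinv_0_lt_compat; lra.
set Bv := INR m.+1 * X ^ m.+1 * log2 (INR j) * log2 (INR m.+1) * ln 2.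
have Claim1 : forall r, (1 <= r)%nat -> (r < j)%nat ->
    INR r.+1 * (Ab m.+1 (j - r + 1) * ln 2) <= Bv.
  move=> r Hr1 Hrj.
  have Hr' : 1 <= INR r by apply: (INR_ge Hr1).
  have Hi : INR (j - r + 1) = INR j - INR r + 1.
    by rewrite INR_addn INR_subn ?(ltnW Hrj) //.
  have Hrj' : INR r + 1 <= INR j by rewrite -S_INR; apply: INR_ge.
  rewrite /Ab subSS subn0 Hi.
  set Y := (INR j - INR r + 1 + 2 * INR m.+1 - 3) / (INR m.+1 - 1).
  have HY : Y = (INR j - INR r + 2 * INR m) / INR m.
    by rewrite /Y S_INR; congr (_ / _); ring.
  have HY0 : 0 <= Y.
    rewrite HY /Rdiv; apply: Rmult_le_pos; first lra.
    by left; apply: Rinv_0_lt_compat; lra.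
  have Hd : INR m.+1 * X - INR m * Y = INR r.+1.
    by rewrite HX HY !S_INR; field; lra.
  have A1 : INR r.+1 * Y ^ m <= X ^ m.+1 by rewrite -Hd; apply: amgm.
  have A2 : 0 <= log2 (INR j - INR r + 1) by apply: log2_ge0; lra.
  have A3 : log2 (INR j - INR r + 1) <= log2 (INR j) by apply: log2_le; lra.
  have A4 : 0 <= INR m.+1 * log2 (INR m.+1) * ln 2.
    apply: Rmult_le_pos; last lra.
    apply: Rmult_le_pos; first exact: pos_INR.
    by apply: log2_ge0; rewrite S_INR; lra.
  have A5 : 0 <= INR r.+1 * Y ^ m by apply: Rmult_le_pos; [apply: pos_INR | apply: pow_le].
  have A6 : 0 <= log2 (INR j) by apply: log2_ge0; lra.
  rewrite /Bv.
  have E1 : INR r.+1 * (INR m.+1 * Y ^ m * log2 (INR j - INR r + 1) * log2 (INR m.+1) * ln 2)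
     = (INR r.+1 * Y ^ m) * log2 (INR j - INR r + 1) * (INR m.+1 * log2 (INR m.+1) * ln 2)
     by ring.
  have E2 : INR m.+1 * X ^ m.+1 * log2 (INR j) * log2 (INR m.+1) * ln 2
     = X ^ m.+1 * log2 (INR j) * (INR m.+1 * log2 (INR m.+1) * ln 2) by ring.
  rewrite E1 E2; apply: Rmult_le_compat_r => //.
  by apply: Rmult_le_compat.
have HBv0 : 0 <= Bv.
  rewrite /Bv; apply: Rmult_le_pos; last lra.
  apply: Rmult_le_pos; last by apply: log2_ge0; rewrite S_INR; lra.
  apply: Rmult_le_pos; last by apply: log2_ge0; lra.
  by apply: Rmult_le_pos; [apply: pos_INR | apply: pow_le].
have Claim2 : forall r, (r < j)%nat ->
    INR (expn (Sb m.+1 (j - r + 1)) r * Sb m.+1 (j - r)) <= exp Bv.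
  case => [|r] Hr.
    rewrite expn0 mul1n subn0.
    apply: Rle_trans (IH j Hj) _; apply: exp_le'.
    have H1 := Claim1 1%nat (leqnn 1) Hj.
    have E : (j - 1 + 1)%nat = j by rewrite subnK // ltnW.
    rewrite E in H1.
    have H0 : 0 <= Ab m.+1 j * ln 2.
      by apply: Rmult_le_pos; [apply: Ab_ge0 => //; apply: ltnW | lra].
    have E2 : INR 2 = 2 by [].
    rewrite E2 in H1; lra.
  have Hle : (Sb m.+1 (j - r.+1) <= Sb m.+1 (j - r.+1 + 1))%nat by apply: Sb_mono; rewrite leq_addr.
  apply: Rle_trans (INR_le (leq_mul (leqnn _) Hle)) _.
  rewrite -expnSr INR_expn.
  have Hi : (2 <= j - r.+1 + 1)%nat by rewrite addn1 ltnS subn_gt0.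
  have Hs0 : 0 <= INR (Sb m.+1 (j - r.+1 + 1)) by apply: pos_INR.
  apply: Rle_trans (pow_incr _ _ r.+2 (conj Hs0 (IH _ Hi))) _.
  rewrite exp_pow_INR; apply: exp_le'; apply: Claim1 => //.
have Hk0 : 0 <= INR m.+2 ^ j by apply: pow_le; apply: pos_INR.
have Claim3 : INR (Sb m.+2 j) <= 1 + INR j * (INR m.+2 ^ j * exp Bv).
  rewrite Sb_eq INR_addn.
  have -> : INR 1 = 1 by [].
  apply: Rplus_le_compat_l.
  have := @INR_sumn_le (iota 0 j)
    (fun r => expn (m.+2 * Sb m.+1 (j - r + 1)) r * (m.+2 * Sb m.+1 (j - r)))%nat
    (INR m.+2 ^ j * exp Bv).
  rewrite size_iota; apply => r; rewrite mem_iota add0n => /andP [_ Hr].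
  have E : (expn (m.+2 * Sb m.+1 (j - r + 1)) r * (m.+2 * Sb m.+1 (j - r)) =
      expn m.+2 r.+1 * (expn (Sb m.+1 (j - r + 1)) r * Sb m.+1 (j - r)))%nat.
    by rewrite expnMn expnSr -!mulnA; congr (_ * _)%nat; rewrite mulnCA.
  rewrite E.
  have Hle : (expn m.+2 r.+1 <= expn m.+2 j)%nat by apply: leq_pexp2l.
  apply: Rle_trans (INR_le (leq_mul Hle (leqnn _))) _.
  rewrite INR_muln INR_expn; apply: Rmult_le_compat_l => //.
  exact: Claim2.
apply: Rle_trans Claim3 _.
have Hk2 : 3 <= INR m.+2 by rewrite !S_INR; lra.
have Hpk : INR m.+2 ^ j = exp (INR j * ln (INR m.+2)).
  by rewrite -exp_pow_INR exp_ln //; lra.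
have Q1 : 1 <= INR m.+2 ^ j * exp Bv.
  rewrite Hpk -exp_plus -exp_0; apply: exp_le'.
  have : 0 <= ln (INR m.+2) by apply: ln_ge0; lra.
  have : 0 <= INR j by lra.
  nra.
apply: (@Rle_trans _ ((INR j + 2) * (INR m.+2 ^ j * exp Bv))); first nra.
rewrite Hpk -exp_plus -[INR j + 2]exp_ln; last lra.
rewrite -exp_plus; apply: exp_le'.
set P := X ^ m.+1.
set lj := log2 (INR j).
set lk := log2 (INR m.+2).
set lk1 := log2 (INR m.+1).
have HAb : Ab m.+2 j * ln 2 = INR m.+2 * P * lj * lk * ln 2.
  by rewrite /Ab subSS subn0.
rewrite HAb /Bv -/P -/lj -/lk1.
have HP : INR j + 2 <= P.
  have Ht : 0 <= (INR j + INR m) / (INR m + 1).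
    rewrite /Rdiv; apply: Rmult_le_pos; first lra.
    by left; apply: Rinv_0_lt_compat; lra.
  have EX : X = 1 + (INR j + INR m) / (INR m + 1) by rewrite HX; field; lra.
  rewrite /P EX; apply: Rle_trans (bernoulli _ Ht); rewrite S_INR.
  have -> : (INR m + 1) * ((INR j + INR m) / (INR m + 1)) = INR j + INR m by field; lra.
  lra.
have Hlj1 : 1 <= lj.
  rewrite /lj /log2; apply: (Rmult_le_reg_r (ln 2)) => //.
  rewrite Rmult_1_l Rmult_assoc Rinv_l ?Rmult_1_r; last lra.
  apply: ln_le'; lra.
have Hljj : ln (INR j) <= lj.
  rewrite /lj /log2.
  have Hlnj : 0 <= ln (INR j) by apply: ln_ge0; lra.
  have Hl2' := ln2_lt1.
  apply: (Rmult_le_reg_r (ln 2)) => //.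
  rewrite Rmult_assoc Rinv_l ?Rmult_1_r; last lra.
  nra.
have Hlk : lk * ln 2 = ln (INR m.+2) by rewrite /lk /log2; field; lra.
have Hlk1 : 0 <= lk1 by apply: log2_ge0; rewrite S_INR; lra.
have Hlk1k : lk1 <= lk by apply: log2_le; rewrite !S_INR; lra.
have Hlnk : 1 <= ln (INR m.+2).
  apply: Rle_trans ln3_ge1 _; apply: ln_le'; lra.
have Hj2 : ln (INR j + 2) <= 2 * ln (INR j).
  have -> : 2 * ln (INR j) = ln (INR j * INR j) by rewrite ln_mult; lra.
  apply: ln_le'; nra.
have HP0 : 0 <= P by lra.
have F1 : INR m.+1 * P * lj * lk1 * ln 2 + P * lj * ln (INR m.+2) <=
          INR m.+2 * P * lj * lk * ln 2.
  rewrite -Hlk S_INR [INR m.+2]S_INR S_INR.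
  have H0 : 0 <= P * lj * ln 2 by apply: Rmult_le_pos; [apply: Rmult_le_pos|]; lra.
  have H1 : 0 <= (INR m + 1) * (lk - lk1) by apply: Rmult_le_pos; lra.
  nra.
have F2 : (INR j + 2) * lj * ln (INR m.+2) <= P * lj * ln (INR m.+2).
  apply: Rmult_le_compat_r; first lra.
  by apply: Rmult_le_compat_r; lra.
have F3 : INR j * ln (INR m.+2) + ln (INR j + 2) <= (INR j + 2) * lj * ln (INR m.+2).
  have G1 : 0 <= INR j * ln (INR m.+2) * (lj - 1) by apply: Rmult_le_pos; [apply: Rmult_le_pos|]; lra.
  have G2 : 0 <= lj * (ln (INR m.+2) - 1) by apply: Rmult_le_pos; lra.
  nra.
lra.
Qed.

Lemma bound k j : (2 <= k)%nat -> (2 <= j)%nat -> INR (Sb k j) <= exp (Ab k j * ln 2).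
Proof.
move=> Hk; rewrite -(subnK Hk); elim: (k - 2)%nat j => [|m IH] j Hj.
  by rewrite add0n; apply: base2.
rewrite addSn addn2; apply: step => //.
by move=> i Hi; rewrite -addn2; apply: IH.
Qed.

Close Scope R_scope.

Theorem theorem2 (A : finType) (k n : nat) (L : seq A -> Prop) :
  #|A| = k -> (1 < k)%N -> (2 <= n)%N ->
  n_PT n L ->
  canonical_dfa_states_le L
    (Rpower 2 (INR k * ((INR n + 2 * INR k - 3) / (INR k - 1)) ^ (k - 1)
               * log2 (INR n) * log2 (INR k)))%R.
Proof.
move=> HA Hk Hn HL s Hs.
have H1 := comb_main HL Hs; rewrite HA in H1.
apply: Rle_trans (INR_le H1) _.
rewrite /Rpower; exact: bound.
Qed.
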